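(* Consider the (unscaled) HILT model on $N$ nodes with weight $\gamma=\Gamma/(N-1)$, $\Gamma\in(0,1]$, and i.i.d. thresholds $\Theta_1,\dots,\Theta_N$ with continuous c.d.f. $F$ satisfying $F(0)=0$. Let $\mathcal A(0)$ be a fixed nonempty initial set of destinations, $\mathcal D(0)=\mathcal A(0)$, $\mathcal B(0)=\emptyset$, and for $k\ge0$ let $\mathcal A(k+1)=\mathcal A(k)\cup\{i\notin\mathcal A(k):\gamma|\mathcal A(k)|\ge\Theta_i\}$, $\mathcal D(k+1)=\mathcal A(k+1)\setminus\mathcal A(k)$, $\mathcal B(k+1)=\mathcal A(k)$. Let $B(k)=|\mathcal B(k)|$, $D(k)=|\mathcal D(k)|$. Then $(B(k),D(k))_{k\ge0}$ is a discrete-time Markov chain: $B(k+1)=B(k)+D(k)$, and for every $k\ge0$ and every history with positive probability ending in $(B(k),D(k))=(j,m)$ with $F(\gamma j)<1$, $$\mathbb{P}\big(D(k+1)=\ell\,\big|\,(B(0),D(0)),\dots,(B(k),D(k))\big)=\binom{N-j-m}{\ell}p^\ell(1-p)^{N-j-m-\ell},\quad p=\frac{F(\gamma(j+m))-F(\gamma j)}{1-F(\gamma j)}.$$ *)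

(* Defs.v *)
From HB Require Import structures.
From mathcomp Require Import all_boot all_order all_algebra.
From mathcomp Require Import all_classical all_reals all_analysis.
Set Implicit Arguments. Unset Strict Implicit. Unset Printing Implicit Defensive.
Import Order.TTheory GRing.Theory Num.Theory.
Import numFieldNormedType.Exports.
Local Open Scope classical_set_scope.
Local Open Scope ring_scope.

Section HILT.
Context {d : measure_display} {T : measurableType d} {R : realType}.

Definition mutually_independent (P : probability T R) (I : finType)
  (X : I -> T -> R) : Prop :=
  forall (S : {set I}) (Bs : I -> set R),
    (forall i, measurable (Bs i)) ->
    P (\bigcap_(i in [set i | i \in S]) (X i @^-1` Bs i)) =
    (\prod_(i in S) P (X i @^-1` Bs i))%E.

Definition cond_prob (P : probability T R) (E H : set T) : R :=
  fine (P (E `&` H)) / fine (P H).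

Variables (N : nat) (gamma : R) (Theta : 'I_N -> T -> R) (A0 : {set 'I_N}).

Fixpoint Aset (k : nat) (w : T) : {set 'I_N} :=
  match k with
  | 0 => A0
  | k'.+1 => let a := Aset k' w in
      a :|: [set i | (i \notin a) && (Theta i w <= gamma * (#|a|%:R))]
  end.

Definition Bset (k : nat) (w : T) : {set 'I_N} :=
  match k with 0 => finset.set0 | k'.+1 => Aset k' w end.

Definition Dset (k : nat) (w : T) : {set 'I_N} :=
  match k with 0 => A0 | k'.+1 => Aset k'.+1 w :\: Aset k' w end.

Definition Bcard (k : nat) (w : T) : nat := #|Bset k w|.
Definition Dcard (k : nat) (w : T) : nat := #|Dset k w|.

Definition history_event (k : nat) (h : nat -> nat * nat) : set T :=
  [set w | forall i, (i <= k)%N -> (Bcard i w, Dcard i w) = h i].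

End HILT.

(* Main.v *)
Require Import Defs.
From HB Require Import structures.
From mathcomp Require Import all_boot all_order all_algebra.
From mathcomp Require Import all_classical all_reals all_analysis.
From mathcomp Require Import ring.
Import Order.TTheory GRing.Theory Num.Theory.
Import numFieldNormedType.Exports.
Local Open Scope classical_set_scope.
Local Open Scope ring_scope.

Section Proof1.
Variables (d : measure_display) (T : measurableType d) (R : realType)
  (P : probability T R) (N : nat) (gamma : R)
  (Theta : 'I_N -> T -> R) (A0 : {set 'I_N}).

Local Notation A := (Aset gamma Theta A0).

Lemma A_succ k w : A k.+1 w = A k w :|: [set i | (i \notin A k w) && (Theta i w <= gamma * (#|A k w|%:R))].
Proof. by []. Qed.

Lemma A_sub k w : A k w \subset A k.+1 w.
Proof. by rewrite A_succ; apply: finset.subsetUl. Qed.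

Lemma B_rec k w : Bcard gamma Theta A0 k.+1 w
   = (Bcard gamma Theta A0 k w + Dcard gamma Theta A0 k w)%N.
Proof.
case: k => [|k]; rewrite /Bcard /Dcard /=; first by rewrite cards0.
rewrite cardsD (finset.setIidPr (A_sub k w)) subnKC //.
by rewrite subset_leq_card // A_sub.
Qed.

Definition mu (X : set T) : R := fine (P X).

Lemma muE X : measurable X -> P X = (mu X)%:E.
Proof. by move=> mX; rewrite /mu fineK // fin_num_measure. Qed.

Lemma part_seq (I : eqType) (Y : I -> set T) (X : set T) (s : seq I) :
  uniq s ->
  (forall i j, i != j -> Y i `&` Y j = set0) ->
  (forall i, measurable (X `&` Y i)) ->
  measurable (X `&` [set w | exists2 i, i \in s & Y i w]) /\
  P (X `&` [set w | exists2 i, i \in s & Y i w]) = (\sum_(i <- s) P (X `&` Y i))%E.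
Proof.
move=> + disj mXY; elim: s => [|a s IH] /=.
  have -> : X `&` [set w | exists2 i, i \in [::] & Y i w] = set0.
    by apply/seteqP; split => w //= [_ [i]]; rewrite in_nil.
  by rewrite measure0 big_nil.
move=> /andP [as_ us]; have [m1 e1] := IH us.
have -> : X `&` [set w | exists2 i, i \in a :: s & Y i w] =
   (X `&` Y a) `|` (X `&` [set w | exists2 i, i \in s & Y i w]).
  apply/seteqP; split => w /=.
    move=> [Xw [i]]; rewrite in_cons => /orP [/eqP -> Yw|iis Yw]; first by left.
    by right; split => //; exists i.
  case=> [[Xw Yw]|[Xw [i iis Yw]]]; split => //.
    by exists a => //; rewrite mem_head.
  by exists i => //; rewrite in_cons iis orbT.
split; first exact: measurableU.
rewrite measureU //; first by rewrite big_cons -e1.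
apply/seteqP; split => w //= [[Xw Yw] [_ [i iis Yi]]].
have ai : a != i by apply: contraNneq as_ => ->.
have := disj _ _ ai; move/seteqP=> [H _]; exact: (H w (conj Yw Yi)).
Qed.

Lemma part_fin (I : finType) (Y : I -> set T) (X : set T) :
  (forall i j, i != j -> Y i `&` Y j = set0) ->
  (forall w, exists i, Y i w) ->
  (forall i, measurable (X `&` Y i)) ->
  measurable X /\ mu X = \sum_(i <- enum I) mu (X `&` Y i).
Proof.
move=> disj cov mXY.
have [m e] := @part_seq I Y X (enum I) (enum_uniq I) disj mXY.
have eX : X `&` [set w | exists2 i, i \in enum I & Y i w] = X.
  apply/seteqP; split => w /=; first by case.
  by move=> Xw; split => //; have [i Yi] := cov w; exists i => //; rewrite mem_enum.
rewrite eX in m e; split => //.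
rewrite /mu e -EFin_sum_fine ?fineK // => i _.
by rewrite fin_num_measure.
Qed.


Variable k : nat.
Definition FF := {ffun 'I_k.+1 -> {set 'I_N}}.
Definition g (f : FF) (i : nat) : {set 'I_N} := f (inord i).
Definition Ef (f : FF) : set T := [set w | forall i, (i <= k)%N -> A i w = g f i].
Definition cf (f : FF) : bool :=
  (g f 0 == A0) && [forall i : 'I_k, g f i \subset g f i.+1].
Definition lev (f : FF) i : R := gamma * #|g f i|%:R.
Definition Sni (f : FF) n i : set R :=
  if n \in g f i then setT else
  if n \in g f i.+1 then [set x | x <= lev f i] else ~` [set x | x <= lev f i].
Definition Sn (f : FF) n : set R := \bigcap_(i in [set i | (i < k)%N]) Sni f n i.
Definition box (U : 'I_N -> set R) : set T :=
  \bigcap_(n in [set n | n \in [set: 'I_N]%SET]) (Theta n @^-1` U n).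

Lemma inT n : [set n | n \in [set: 'I_N]%SET] n.
Proof. by rewrite /= inE. Qed.

Lemma Ef_cf f w : Ef f w -> cf f.
Proof.
move=> H; apply/andP; split; first by rewrite -H.
apply/forallP => i; rewrite -!H ?A_sub //; last exact: ltnW.
Qed.

Lemma Ef_empty f : ~~ cf f -> Ef f = set0.
Proof.
move=> ncf; apply/seteqP; split => w //= /Ef_cf.
by rewrite (negbTE ncf).
Qed.

Lemma Ef_box f : cf f -> Ef f = box (Sn f).
Proof.
move=> /andP [/eqP cf0 /forallP cfs].
apply/seteqP; split => w /=.
  move=> Hw n _ i /= ik; rewrite /Sni.
  have e := A_succ i w; rewrite (Hw i.+1 ik) (Hw i (ltnW ik)) in e.
  case: (boolP (n \in g f i)) => ni //.
  case: (boolP (n \in g f i.+1)) => ni1 /=.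
    by move: ni1; rewrite e !inE (negbTE ni).
  by move: ni1; rewrite e !inE (negbTE ni) /= => /negP.
move=> Hb i; elim: i => [|i IH] ik; first by rewrite /= cf0.
rewrite A_succ IH ?(ltnW ik) //; apply/finset.setP => n; rewrite !inE.
have := Hb n (inT n) i ik; rewrite /Sni.
case: (boolP (n \in g f i)) => ni /=.
  by move=> _; rewrite (fintype.subsetP (cfs (Ordinal ik)) n ni).
case: (boolP (n \in g f i.+1)) => ni1 /= H; first by rewrite H.
by apply/negP.
Qed.

Lemma Ef_disj f f' : f != f' -> Ef f `&` Ef f' = set0.
Proof.
move=> ne; apply/seteqP; split => w // [H1 H2]; move: ne => /negP; apply.
apply/eqP/ffunP => i.
have := H1 i (leq_ord i); have := H2 i (leq_ord i).
by rewrite /g inord_val => -> ->.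
Qed.

Lemma Ef_cov w : exists f, Ef f w.
Proof.
exists [ffun i : 'I_k.+1 => A i w] => i ik.
by rewrite /g ffunE inordK.
Qed.

Variable h : nat -> nat * nat.
Definition Bg (f : FF) i := match i with 0 => 0%N | i'.+1 => #|g f i'| end.
Definition Dg (f : FF) i :=
  match i with 0 => #|A0| | i'.+1 => #|g f i'.+1 :\: g f i'| end.
Definition consist (f : FF) := [forall i : 'I_k.+1, (Bg f i, Dg f i) == h i].

Lemma hist_Ef f w : Ef f w ->
  (history_event gamma Theta A0 k h w <-> consist f).
Proof.
move=> Hw.
have BD i : (i <= k)%N -> (Bcard gamma Theta A0 i w, Dcard gamma Theta A0 i w) = (Bg f i, Dg f i).
  case: i => [|i] ik; first by rewrite /Bcard /Dcard /= cards0.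
  by rewrite /Bcard /Dcard /= -(Hw i (ltnW ik)) -(Hw i.+1 ik).
split.
  move=> H; apply/forallP => i; apply/eqP; rewrite -BD ?leq_ord //.
  exact: H (leq_ord i).
move=> /forallP C i ik; rewrite BD //.
by have /eqP := C (Ordinal (ik : (i < k.+1)%N)).
Qed.


Hypothesis gamma_ge0 : 0 <= gamma.
Hypothesis mTheta : forall i, measurable_fun setT (Theta i).
Hypothesis indep : mutually_independent P Theta.
Variable F : R -> R.
Hypothesis distF : forall i (x : R), P [set w | Theta i w <= x] = (F x)%:E.
Hypothesis F0 : F 0 = 0.

Lemma meas_le (a : R) : measurable [set x : R | x <= a].
Proof.
have -> : [set x : R | x <= a] = [set` `]-oo, a]] by apply/seteqP; split => x /=; rewrite in_itv.
exact: measurable_itv.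
Qed.

Lemma meas_pre n (U : set R) : measurable U -> measurable (Theta n @^-1` U).
Proof. by move=> mU; have := mTheta n measurableT U mU; rewrite setTI. Qed.

Lemma meas_box U : (forall n, measurable (U n)) -> measurable (box U).
Proof.
move=> mU; apply: fin_bigcap_measurable; first exact: finite_finset.
by move=> n _; apply: meas_pre.
Qed.

Lemma meas_Sn f n : measurable (Sn f n).
Proof.
apply: bigcap_measurableType => i _; rewrite /Sni.
case: ifP => _; first exact: measurableT.
case: ifP => _; first exact: meas_le.
apply: measurableC; exact: meas_le.
Qed.

Lemma box_prob U : (forall n, measurable (U n)) ->
  mu (box U) = \prod_(n : 'I_N) mu (Theta n @^-1` U n).
Proof.
move=> mU; rewrite /mu /box indep //.
under eq_bigr => n _ do rewrite (muE _ (meas_pre n _ (mU n))).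
by rewrite prodEFin /=; apply: eq_bigl => n; rewrite inE.
Qed.

Definition Z (f : FF) w : {set 'I_N} := [set n | (n \notin g f k) && (Theta n w <= lev f k)]%SET.
Definition Ys (f : FF) (S : {set 'I_N}) := [set w | Z f w = S].
Variable l : nat.
Definition E := [set w | Dcard gamma Theta A0 k.+1 w = l].
Definition Tn (f : FF) (S : {set 'I_N}) n : set R :=
  if n \in g f k then setT else
  if n \in S then [set x | x <= lev f k] else ~` [set x | x <= lev f k].

Lemma D_Ef f w : Ef f w -> Dcard gamma Theta A0 k.+1 w = #|Z f w|.
Proof.
move=> Hw; rewrite /Dcard.
have -> : Dset gamma Theta A0 k.+1 w = A k.+1 w :\: A k w by [].
rewrite A_succ (Hw k (leqnn k)); apply: eq_card => n; rewrite !inE.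
by case: (n \in g f k).
Qed.

Lemma EEfY f S : cf f -> (E `&` Ef f) `&` Ys f S =
  if (S \subset ~: g f k) && (#|S| == l) then box (fun n => Sn f n `&` Tn f S n) else set0.
Proof.
move=> cff.
have H1 w : ((E `&` Ef f) `&` Ys f S) w ->
   ((S \subset ~: g f k) && (#|S| == l)) /\ box (fun n => Sn f n `&` Tn f S n) w.
  move=> [[Ew Efw] Yw]; rewrite /Ys /= in Yw.
  have Dw := D_Ef _ _ Efw; rewrite /E /= Dw Yw in Ew.
  split.
    rewrite Ew eqxx andbT; apply/fintype.subsetP => n; rewrite -Yw !inE.
    by case/andP.
  move: (Efw); rewrite (Ef_box _ cff) => Bw n nT; split; first exact: (Bw n nT).
  rewrite /Tn; case: ifP => nk //.
  case: ifP => nS /=; move: nS; rewrite -Yw inE nk /=; first by [].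
  by move=> /negbT /negP.
have H2 w : ((S \subset ~: g f k) && (#|S| == l)) ->
   box (fun n => Sn f n `&` Tn f S n) w -> ((E `&` Ef f) `&` Ys f S) w.
  move=> /andP [sub /eqP cS] Bw.
  have Efw : Ef f w by rewrite (Ef_box _ cff) => n _; have [] := Bw n (inT n).
  have Zw : Z f w = S.
    apply/finset.setP => n; rewrite inE; have [_] := Bw n (inT n); rewrite /Tn.
    case: ifP => nk /=.
      by move=> _; apply/esym/negbTE; apply: contraTN nk => nS;
         have := fintype.subsetP sub n nS; rewrite inE.
    by case: ifP => nS /= H; [rewrite H | apply/negbTE/negP].
  by split => //; split => //; rewrite /E /= (D_Ef _ _ Efw) Zw.
case: ifP => C; apply/seteqP; split => w.
- by move/H1 => [].
- exact: H2.
- by move/H1 => []; rewrite C.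
- by [].
Qed.


Lemma g_mono f : cf f -> forall i i', (i <= i')%N -> (i' <= k)%N -> g f i \subset g f i'.
Proof.
move=> /andP [_ /forallP cfs] i i'; elim: i' => [|i' IH] ii' i'k.
  by move: ii'; rewrite leqn0 => /eqP ->; apply: fintype.subxx.
move: ii'; rewrite leq_eqVlt => /orP [/eqP -> | ii']; first exact: fintype.subxx.
apply: fintype.subset_trans (IH ii' (ltnW i'k)) _.
exact: (cfs (Ordinal i'k)).
Qed.

Lemma lev_mono f i i' : cf f -> (i <= i')%N -> (i' <= k)%N -> lev f i <= lev f i'.
Proof.
move=> cff ii' i'k; rewrite /lev ler_wpM2l // ler_nat.
exact/subset_leq_card/g_mono.
Qed.

Lemma Sn_out0 f n : k = 0%N -> Sn f n = setT.
Proof.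
move=> k0; apply/seteqP; split => x // _ i /=.
by rewrite k0 ltn0.
Qed.

Lemma Sn_outS f n k' : cf f -> n \notin g f k -> k = k'.+1 ->
  Sn f n = ~` [set x | x <= lev f k'].
Proof.
move=> cff nk Ek.
have ni i : (i <= k)%N -> n \notin g f i.
  move=> ik; apply: contra nk => ni.
  exact: (fintype.subsetP (g_mono _ cff _ _ ik (leqnn k)) n ni).
have Si i : (i < k)%N -> Sni f n i = ~` [set x | x <= lev f i].
  by move=> ik; rewrite /Sni (negbTE (ni i (ltnW ik))) (negbTE (ni i.+1 ik)).
apply/seteqP; split => x /=.
  move=> H; have k'k : (k' < k)%N by rewrite Ek.
  by have := H k' k'k; rewrite (Si k' k'k).
move=> nx i /= ik; rewrite Si // => /= xi; apply: nx.
apply: le_trans xi _; apply: lev_mono => //; last by rewrite Ek.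
by move: ik; rewrite Ek ltnS.
Qed.

Lemma muLe n x : mu (Theta n @^-1` [set y | y <= x]) = F x.
Proof. by rewrite /mu; have -> : Theta n @^-1` [set y | y <= x] = [set w | Theta n w <= x] by []; rewrite distF. Qed.

Lemma muGt n x : mu (Theta n @^-1` ~` [set y | y <= x]) = 1 - F x.
Proof.
rewrite /mu -preimage_setC probability_setC; last exact: (meas_pre n _ (meas_le x)).
have -> : Theta n @^-1` [set y | y <= x] = [set w | Theta n w <= x] by [].
by rewrite distF -EFinB.
Qed.

Lemma muBet n a b : a <= b ->
  mu (Theta n @^-1` (~` [set y | y <= a] `&` [set y | y <= b])) = F b - F a.
Proof.
move=> ab.
have mX : measurable (Theta n @^-1` (~` [set y | y <= a] `&` [set y | y <= b])).
  by apply: meas_pre; apply: measurableI; [apply: measurableC|]; apply: meas_le.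
have e : P [set w | Theta n w <= b] =
   (P [set w | (Theta n w <= a)%R] + P (Theta n @^-1` (~` [set y | (y <= a)%R] `&` [set y | (y <= b)%R])))%E.
  rewrite -measureU //.
  - congr (P _); apply/seteqP; split => w /=.
      by case: (ssrbool.boolP (Theta n w <= a)) => H; [left|right].
    by case=> [H|[_ H]] //; apply: le_trans H ab.
  - exact: (meas_pre n _ (meas_le a)).
  - by apply/seteqP; split => w //= [H [H' _]].
rewrite !distF (muE _ mX) -EFinD in e.
case: e => ->; rewrite addrC addKr //.
Qed.


Definition F1 f := F (gamma * (Bg f k)%:R).
Definition F2 f := F (lev f k).
Definition Q f := \prod_(n in g f k) mu (Theta n @^-1` Sn f n).

Lemma HB0 f : k = 0%N -> Bg f k = 0%N.
Proof. have H : forall i, i = 0%N -> Bg f i = 0%N by move=> i ->. apply: H. Qed.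

Lemma HBS f k' : k = k'.+1 -> Bg f k = #|g f k'|.
Proof. have H : forall i, i = k'.+1 -> Bg f i = #|g f k'| by move=> i ->. apply: H. Qed.

Lemma kcase : k = 0%N \/ exists k', k = k'.+1.
Proof. by case: (k) => [|k']; [left|right; exists k']. Qed.

Lemma fac1 f n : cf f -> n \notin g f k -> mu (Theta n @^-1` Sn f n) = 1 - F1 f.
Proof.
move=> cff nk; rewrite /F1; case: kcase => [k0|[k' Ek]].
  by rewrite Sn_out0 // HB0 // mulr0 F0 subr0 preimage_setT /mu probability_setT.
by rewrite (Sn_outS _ _ _ cff nk Ek) muGt (HBS _ _ Ek).
Qed.

Lemma fac2 f n : cf f -> n \notin g f k ->
  mu (Theta n @^-1` (Sn f n `&` [set x | x <= lev f k])) = F2 f - F1 f.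
Proof.
move=> cff nk; rewrite /F1 /F2; case: kcase => [k0|[k' Ek]].
  by rewrite Sn_out0 // setTI muLe HB0 // mulr0 F0 subr0.
rewrite (Sn_outS _ _ _ cff nk Ek) muBet; first by rewrite (HBS f k' Ek).
by apply: lev_mono => //; rewrite Ek.
Qed.

Lemma fac3 f n : cf f -> n \notin g f k ->
  mu (Theta n @^-1` (Sn f n `&` ~` [set x | x <= lev f k])) = 1 - F2 f.
Proof.
move=> cff nk; rewrite /F2; case: kcase => [k0|[k' Ek]].
  by rewrite Sn_out0 // setTI muGt.
rewrite (Sn_outS _ _ _ cff nk Ek).
have le : lev f k' <= lev f k by apply: lev_mono => //; rewrite Ek.
have -> : ~` [set x | x <= lev f k'] `&` ~` [set x | x <= lev f k] =
          ~` [set x | x <= lev f k].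
  apply/seteqP; split => x /=; first by case.
  by move=> H; split => // H'; apply: H; apply: le_trans H' le.
exact: muGt.
Qed.

Lemma cardk f : cf f -> #|g f k| = (Bg f k + Dg f k)%N.
Proof.
move=> cff; case: kcase => [k0|[k' Ek]].
  have H : forall i, i = 0%N -> #|g f i| = (Bg f i + Dg f i)%N.
    by move=> i -> /=; move: cff => /andP [/eqP -> _].
  exact: H.
have H : forall i, i = k'.+1 -> #|g f i| = (Bg f i + Dg f i)%N.
  move=> i -> /=; rewrite cardsD (finset.setIidPr _) ?subnKC //.
    by apply: subset_leq_card; apply: g_mono => //; rewrite -Ek.
  by apply: g_mono => //; rewrite -Ek.
exact: H.
Qed.

Lemma prodEf f : cf f ->
  \prod_(n : 'I_N) mu (Theta n @^-1` Sn f n) = Q f * (1 - F1 f) ^+ #|~: g f k|.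
Proof.
move=> cff; rewrite (bigID (fun n => n \in g f k)) /=; congr (_ * _).
rewrite (eq_bigl (fun n => n \in ~: g f k)); last by move=> n; rewrite inE.
rewrite (eq_bigr (fun _ => 1 - F1 f)); first by rewrite prodr_const.
by move=> n; rewrite inE => nk; rewrite fac1.
Qed.

Lemma prodEfS f (S : {set 'I_N}) : cf f -> S \subset ~: g f k ->
  \prod_(n : 'I_N) mu (Theta n @^-1` (Sn f n `&` Tn f S n)) =
  Q f * ((F2 f - F1 f) ^+ #|S| * (1 - F2 f) ^+ (#|~: g f k| - #|S|)).
Proof.
move=> cff sub; rewrite (bigID (fun n => n \in g f k)) /=; congr (_ * _).
  by apply: eq_bigr => n nk; rewrite /Tn nk setIT.
rewrite (bigID (fun n => n \in S)) /=; congr (_ * _).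
  rewrite (eq_bigl (fun n => n \in S)); last first.
    move=> n; case: (ssrbool.boolP (n \in S)) => nS; rewrite ?andbT ?andbF //.
    by have := fintype.subsetP sub n nS; rewrite inE.
  rewrite (eq_bigr (fun _ => F2 f - F1 f)); first by rewrite prodr_const.
  move=> n nS; have nk : n \notin g f k.
    by have := fintype.subsetP sub n nS; rewrite inE.
  by rewrite /Tn (negbTE nk) nS fac2.
rewrite (eq_bigl (fun n => n \in ~: g f k :\: S)); last first.
  by move=> n; rewrite !inE andbC.
rewrite (eq_bigr (fun _ => 1 - F2 f)).
  by rewrite prodr_const cardsD (finset.setIidPr sub).
move=> n; rewrite !inE => /andP [nS nk].
by rewrite /Tn (negbTE nk) (negbTE nS) fac3.
Qed.


Lemma alg (Qv a b : R) (r : nat) : 1 - a != 0 ->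
  let p := (b - a) / (1 - a) in
  Qv * ((b - a) ^+ l * (1 - b) ^+ (r - l)) *+ 'C(r, l) =
  'C(r, l)%:R * p ^+ l * (1 - p) ^+ (r - l) * (Qv * (1 - a) ^+ r).
Proof.
move=> na p; case: (leqP l r) => lr; last by rewrite bin_small // mulr0n !mul0r.
have e1 : b - a = p * (1 - a) by rewrite divfK.
have e2 : 1 - b = (1 - p) * (1 - a).
  by rewrite mulrBl mul1r divfK //; ring.
have er : (1 - a) ^+ r = (1 - a) ^+ l * (1 - a) ^+ (r - l) by rewrite -exprD subnKC.
rewrite e1 e2 !exprMn er -mulr_natl; ring.
Qed.

Lemma meas_Tn f S n : measurable (Tn f S n).
Proof.
rewrite /Tn; case: ifP => _; first exact: measurableT.
case: ifP => _; first exact: meas_le.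
apply: measurableC; exact: meas_le.
Qed.

Lemma EEf f : cf f -> measurable (E `&` Ef f) /\
  mu (E `&` Ef f) = \sum_(S <- enum {set 'I_N}) mu ((E `&` Ef f) `&` Ys f S).
Proof.
move=> cff; apply: part_fin.
- move=> S S' ne; apply/seteqP; split => w // [H1 H2].
  by move: ne; rewrite /Ys /= in H1 H2; rewrite -H1 -H2 eqxx.
- by move=> w; exists (Z f w).
- move=> S; rewrite EEfY //; case: ifP => _; last exact: measurable0.
  apply: meas_box => n; apply: measurableI; [exact: meas_Sn | exact: meas_Tn].
Qed.

Definition pp (j m : nat) := (F (gamma * (j + m)%:R) - F (gamma * j%:R)) / (1 - F (gamma * j%:R)).
Definition cc (j m : nat) :=
  'C(N - j - m, l)%:R * pp j m ^+ l * (1 - pp j m) ^+ (N - j - m - l).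

Lemma key f j m : cf f -> Bg f k = j -> Dg f k = m -> F (gamma * j%:R) < 1 ->
  mu (E `&` Ef f) = cc j m * mu (Ef f).
Proof.
move=> cff Bj Dm Flt.
have [_ ->] := EEf _ cff.
have er : #|~: g f k| = (N - j - m)%N.
  have := cardsC (g f k); rewrite card_ord cardk // Bj Dm => e.
  by rewrite -[X in (X - j - m)%N]e -subnDA addKn.
rewrite (eq_bigr (fun S : {set 'I_N} => if (S \subset ~: g f k) && (#|S| == l) then
   Q f * ((F2 f - F1 f) ^+ l * (1 - F2 f) ^+ (#|~: g f k| - l)) else 0)); last first.
  move=> S _; rewrite (EEfY _ _ cff); case: ifP => [/andP [sub /eqP cS]|_].
    rewrite box_prob; last by move=> n; apply: measurableI; [exact: meas_Sn | exact: meas_Tn].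
    by rewrite prodEfS // cS.
  by rewrite /mu measure0.
rewrite (Ef_box _ cff) box_prob; last exact: meas_Sn.
rewrite prodEf //.
rewrite -big_mkcond big_enum_cond /=.
rewrite (eq_bigl (fun S => S \in [set S : {set 'I_N} | (S \subset ~: g f k) & #|S| == l])); last by move=> S; rewrite inE.
rewrite sumr_const cards_draws er /F1 /F2 /lev cardk // Bj Dm /cc /pp.
apply: alg; rewrite subr_eq0 eq_sym lt_eqF //.
Qed.


Lemma final j m : h k = (j, m) -> F (gamma * j%:R) < 1 ->
  (0 < P (history_event gamma Theta A0 k h))%E ->
  cond_prob P E (history_event gamma Theta A0 k h) = cc j m.
Proof.
move=> hk Flt hpos.
set H := history_event gamma Theta A0 k h.
have HEf f : H `&` Ef f = if consist f then Ef f else set0.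
  case: ifP => C; apply/seteqP; split => w //=.
  - by case.
  - by move=> Efw; split => //; apply: (hist_Ef _ _ Efw).2.
  - by move=> [Hw Efw]; have := (hist_Ef _ _ Efw).1 Hw; rewrite C.
have mEf f : measurable (Ef f).
  case: (ssrbool.boolP (cf f)) => cff; last by rewrite Ef_empty //; exact: measurable0.
  by rewrite Ef_box //; apply: meas_box; exact: meas_Sn.
have mEEf f : measurable (E `&` Ef f).
  case: (ssrbool.boolP (cf f)) => cff; first exact: (EEf _ cff).1.
  by rewrite Ef_empty // setI0; exact: measurable0.
have EH f : (E `&` H) `&` Ef f = if consist f then E `&` Ef f else set0.
  by rewrite -setIA HEf; case: ifP => _ //; rewrite setI0.
have [mH eH] := @part_fin _ Ef H Ef_disj Ef_cov
  (fun f => ltac:(rewrite HEf; case: ifP => _; [exact: mEf | exact: measurable0])).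
have [_ eEH] := @part_fin _ Ef (E `&` H) Ef_disj Ef_cov
  (fun f => ltac:(rewrite EH; case: ifP => _; [exact: mEEf | exact: measurable0])).
have step f : mu ((E `&` H) `&` Ef f) = cc j m * mu (H `&` Ef f).
  rewrite EH HEf; case: ifP => C; last by rewrite /mu measure0 mulr0.
  case: (ssrbool.boolP (cf f)) => cff; last by rewrite Ef_empty // setI0 /mu measure0 mulr0.
  have /forallP/(_ ord_max)/eqP := C; rewrite /= hk => -[Bj Dm].
  exact: key.
change (mu (E `&` H) / mu H = cc j m).
have nz : mu H != 0.
  by move: hpos; rewrite (muE _ mH) lte_fin => hp; rewrite gt_eqF.
rewrite eEH; under eq_bigr do rewrite step.
by rewrite -mulr_sumr -eH mulfK.
Qed.

End Proof1.

Theorem mainTheorem8 (d : measure_display) (T : measurableType d) (R : realType)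
  (P : probability T R) (N : nat) (Gamma : R) (F : R -> R)
  (Theta : 'I_N -> T -> R) (A0 : {set 'I_N}) :
  (1 < N)%N ->
  0 < Gamma -> Gamma <= 1 ->
  continuous F -> F 0 = 0 ->
  (forall i, measurable_fun setT (Theta i)) ->
  mutually_independent P Theta ->
  (forall i (x : R), P [set w | Theta i w <= x] = (F x)%:E) ->
  A0 != finset.set0 ->
  let gamma := Gamma / (N - 1)%:R in
  (forall k w, Bcard gamma Theta A0 k.+1 w
                 = (Bcard gamma Theta A0 k w + Dcard gamma Theta A0 k w)%N) /\
  (forall (k : nat) (h : nat -> nat * nat) (j m l : nat),
     (0 < P (history_event gamma Theta A0 k h))%E ->
     h k = (j, m) ->
     F (gamma * j%:R) < 1 ->
     let p := (F (gamma * (j + m)%:R) - F (gamma * j%:R)) / (1 - F (gamma * j%:R)) in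
     cond_prob P [set w | Dcard gamma Theta A0 k.+1 w = l]
                 (history_event gamma Theta A0 k h)
     = 'C(N - j - m, l)%:R * p ^+ l * (1 - p) ^+ (N - j - m - l)).
Proof.
move=> N1 G0 G1 cF F0 mTh ind distF A0n gamma; split.
  by move=> k w; apply: B_rec.
move=> k h j m l hpos hk Flt p.
have g0 : 0 <= gamma by rewrite /gamma divr_ge0 // ltW.
exact: (@final d T R P N gamma Theta A0 k h g0 mTh ind F distF F0 l j m hk Flt hpos).
Qed.
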